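(* Let $H_1$ and $H_2$ be groups, where $H_2$ does not have exponential growth. Let $G\leqslant H_1\times H_2$ be finitely generated, such that the restriction to $G$ of the projection $H_1\times H_2\to H_1$ is infinite-to-1. Then for any constants $\alpha,\beta>0$ there exists a finite generating set $U$ of $G$ such that $|U^n|<(\alpha|U|)^{\beta n}$ for some $n\in\mathbb{N}$.
   Context: For a finitely generated group $G$ with finite generating set $S$, let $B_S(n)$ be the ball of radius $n$ about the identity in the word metric of $S$, and $\omega(G,S)=\lim_{n\to\infty}|B_S(n)|^{1/n}$; $G$ has exponential growth if $\omega(G,S)>1$ (for some, equivalently every, finite generating set $S$). A group not assumed finitely generated is said not to have exponential growth if none of its finitely generated subgroups has exponential growth. $U^n=\{u_1\cdots u_n:u_i\in U\}$. A homomorphism is infinite-to-1 if its kernel is infinite. *)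

(* Defs.v *)
From HB Require Import structures.
From mathcomp Require Import ssreflect ssrfun ssrbool eqtype ssrnat seq choice.
From mathcomp Require Import monoid.
From mathcomp Require Import finmap.
From Stdlib Require Import Reals.

Set Implicit Arguments.
Unset Strict Implicit.
Unset Printing Implicit Defensive.

Local Open Scope fset_scope.
Local Open Scope group_scope.

Definition prodG (H1 H2 : groupType) : Type := (H1 * H2)%type.
HB.instance Definition _ (H1 H2 : groupType) := Choice.on (prodG H1 H2).

Section Prod.
Variables H1 H2 : groupType.
Definition pmul (x y : prodG H1 H2) : prodG H1 H2 := (x.1 * y.1, x.2 * y.2).
Definition pone : prodG H1 H2 := (1, 1).
Definition pinv (x : prodG H1 H2) : prodG H1 H2 := (x.1^-1, x.2^-1).
Fact pmulA : associative pmul.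
Proof. by move=> [a b] [c d] [e f]; rewrite /pmul /= !mulgA. Qed.
Fact pmul1 : left_id pone pmul.
Proof. by move=> [a b]; rewrite /pmul /= !mul1g. Qed.
Fact pmulr1 : right_id pone pmul.
Proof. by move=> [a b]; rewrite /pmul /= !mulg1. Qed.
Fact pmulV : left_inverse pone pinv pmul.
Proof. by move=> [a b]; rewrite /pmul /= !mulVg. Qed.
Fact pmulrV : right_inverse pone pinv pmul.
Proof. by move=> [a b]; rewrite /pmul /= !mulgV. Qed.
HB.instance Definition _ := isGroup.Build (prodG H1 H2) pmulA pmul1 pmulr1 pmulV pmulrV.
End Prod.

Definition proj1G (H1 H2 : groupType) (x : prodG H1 H2) : H1 := x.1.

Section Growth.
Variable G : groupType.

Inductive gen (S : {fset G}) : G -> Prop :=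
| gen_in x : x \in S -> gen S x
| gen_one : gen S 1
| gen_inv x : gen S x -> gen S x^-1
| gen_mul x y : gen S x -> gen S y -> gen S (x * y).

Definition is_subgroup (K : G -> Prop) : Prop :=
  K 1 /\ (forall x y, K x -> K y -> K (x * y)) /\ (forall x, K x -> K x^-1).

Definition generates (S : {fset G}) (K : G -> Prop) : Prop :=
  forall x, gen S x <-> K x.

Definition fin_generated (K : G -> Prop) : Prop :=
  exists S : {fset G}, generates S K.

Fixpoint fpow (U : {fset G}) (n : nat) : {fset G} :=
  match n with
  | 0 => [fset (1 : G)]
  | n'.+1 => [fset x * y | x in fpow U n', y in U]
  end.

(* ball of radius n about 1 in the word metric of S:
   products of at most n elements of S u S^-1 *)
Fixpoint ball (S : {fset G}) (n : nat) : {fset G} :=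
  match n with
  | 0 => [fset (1 : G)]
  | n'.+1 => ball S n' `|` [fset x * y | x in ball S n', y in S `|` [fset z^-1 | z in S]]
  end.

Definition growth_rate_gt1 (S : {fset G}) : Prop :=
  exists l : R, Un_cv (fun n => Rpower (INR #|` ball S n|) (/ INR n)) l /\ (1 < l)%R.

Definition has_exp_growth (K : G -> Prop) : Prop :=
  exists S : {fset G}, generates S K /\ growth_rate_gt1 S.

(* a (not necessarily f.g.) group does not have exponential growth:
   none of its finitely generated subgroups has exponential growth *)
Definition no_exp_growth : Prop :=
  forall K : G -> Prop, is_subgroup K -> fin_generated K -> ~ has_exp_growth K.
End Growth.

(* the restriction of a homomorphism f to the subgroup K is infinite-to-1:
   its kernel {g in K | f g = 1} is infinite *)
Definition infinite_to_one (G H : groupType) (f : G -> H) (K : G -> Prop) : Prop :=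
  ~ exists s : {fset G}, forall g, K g -> f g = 1 -> g \in s.

(* Main.v *)
Require Import Defs.
From mathcomp Require Import ssreflect ssrfun ssrbool eqtype ssrnat seq choice.
From mathcomp Require Import monoid finmap.
From Stdlib Require Import Reals Lra Lia Classical.
From mathcomp Require Import ssreflect ssrfun ssrbool eqtype ssrnat seq choice.
Local Open Scope fset_scope.
Local Open Scope group_scope.
Lemma sumn_const_le (T : Type) (s : seq T) c : (sumn [seq c | _ <- s] <= size s * c)%N.
Proof. by elim: s => //= x s IH; rewrite mulSn leq_add2l. Qed.
Lemma card_imfset2_le (T1 T2 K : choiceType) (f : T1 -> T2 -> K) (A : {fset T1}) (B : {fset T2}) :
  (#|` [fset f x y | x in A, y in B]| <= #|`A| * #|`B|)%N.
Proof.
rewrite unlock /= size_seq_fset (leq_trans (size_undup _)) //.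
rewrite size_allpairs_dep. exact: sumn_const_le.
Qed.
Section G.
Variable G : groupType.
Implicit Types S : {fset G}.
Lemma ball1 S n : (1 : G) \in ball S n.
Proof. by elim: n => [|n IH] /=; rewrite ?fset11 // in_fsetU IH. Qed.
Lemma ball_sub S n : ball S n `<=` ball S n.+1.
Proof. exact: fsubsetUl. Qed.
Lemma ball_add S m n : ball S (m + n) `<=` [fset x * y | x in ball S m, y in ball S n].
Proof.
elim: n => [|n IH].
  rewrite addn0; apply/fsubsetP => x xb; apply/imfset2P; exists x => //.
  by exists 1; rewrite ?fset11 ?mulg1.
rewrite addnS /=; apply/fsubsetP => z; rewrite in_fsetU => /orP [zb|].
  move/fsubsetP: IH => /(_ z zb) /imfset2P [x xb [y yb ->]].
  by apply/imfset2P; exists x => //; exists y => //; rewrite /= in_fsetU yb.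
move=> /imfset2P [w wb [t tS ->]].
move/fsubsetP: IH => /(_ w wb) /imfset2P [x xb [y yb ->]].
apply/imfset2P; exists x => //; exists (y * t); last by rewrite mulgA.
by rewrite /= in_fsetU; apply/orP; right; apply/imfset2P; exists y => //; exists t.
Qed.

Lemma ball_card_mul S m n : (#|` ball S (m + n)| <= #|` ball S m| * #|` ball S n|)%N.
Proof. apply: leq_trans (fsubset_leq_card (ball_add S m n)) _. apply: card_imfset2_le. Qed.
Lemma ball_card_gt0 S n : (0 < #|` ball S n|)%N.
Proof. by rewrite cardfs_gt0; apply/fset0Pn; exists 1; apply: ball1. Qed.
Lemma fpow_ball S n : fpow S n `<=` ball S n.
Proof.
elim: n => [|n IH] //=; apply/fsubsetP => z /imfset2P [x xb [y yS ->]].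
rewrite in_fsetU; apply/orP; right; apply/imfset2P; exists x; first exact: (fsubsetP IH).
by exists y => //; rewrite /= in_fsetU yS.
Qed.
Lemma fpow_card S n : (#|` fpow S n| <= #|` S| ^ n)%N.
Proof.
elim: n => [|n IH] /=; first by rewrite cardfs1.
by rewrite expnSr (leq_trans (card_imfset2_le _ _ _ _ _ _)) // leq_mul2r IH orbT.
Qed.
End G.

Section RealPart.
Local Open Scope R_scope.

Lemma div_nonneg x y : 0 <= x -> 0 < y -> 0 <= x / y.
Proof. move=> Hx Hy; apply: Rmult_le_pos => //; left; exact: Rinv_0_lt_compat. Qed.

Fixpoint mxa (a : nat -> R) (n : nat) : R :=
  match n with 0 => a 0%nat | S m => Rmax (mxa a m) (a n) end.

Lemma mxa_ge a k r : (r <= k)%coq_nat -> a r <= mxa a k.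
Proof.
elim: k => [|k IH] Hr.
  have -> : r = 0%nat by lia.
  by apply: Rle_refl.
simpl; case: (Nat.eq_dec r (S k)) => [->|Hne]; first by apply: Rmax_r.
apply: Rle_trans (Rmax_l _ _); apply: IH; lia.
Qed.

Lemma subadd_mul a (Hsub : forall m n, a (m + n)%nat <= a m + a n) q k r :
  a (q * k + r)%nat <= INR q * a k + a r.
Proof.
elim: q => [|q IH]; first by rewrite mul0n add0n /=; lra.
rewrite S_INR.
have -> : (q.+1 * k + r = k + (q * k + r))%nat by rewrite mulSn addnA.
apply: Rle_trans (Hsub _ _) _; lra.
Qed.

Lemma inf_exists (a : nat -> R) : (forall n, 0 <= a n) ->
  exists L, (forall n, (0 < n)%coq_nat -> L <= a n / INR n) /\
    forall eps, 0 < eps -> exists n, (0 < n)%coq_nat /\ a n / INR n < L + eps.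
Proof.
move=> Hpos.
set E := fun y => exists n, (0 < n)%coq_nat /\ y = - (a n / INR n).
have HE : bound E.
  exists 0 => y [n [Hn ->]].
  have : 0 <= a n / INR n by apply: div_nonneg => //; apply: lt_0_INR.
  lra.
have HE1 : exists y, E y by exists (- (a 1%nat / INR 1)); exists 1%nat; split => //; lia.
case: (completeness E HE HE1) => M [Hub Hlub].
exists (- M); split.
  move=> n Hn; have : - (a n / INR n) <= M by apply: Hub; exists n.
  lra.
move=> eps Heps.
apply: NNPP => Hno.
have : M <= M - eps; last lra.
apply: Hlub => y [n [Hn ->]].
have : ~ (a n / INR n < - M + eps) by move=> H; apply: Hno; exists n.
lra.
Qed.

Lemma mxa_nonneg a k : (forall n, 0 <= a n) -> 0 <= mxa a k.
Proof. move=> H; apply: Rle_trans (H 0%nat) _; apply: mxa_ge; lia. Qed.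

Lemma fekete (a : nat -> R) : (forall n, 0 <= a n) ->
  (forall m n, a (m + n)%nat <= a m + a n) ->
  exists L, (forall n, (0 < n)%coq_nat -> L <= a n / INR n) /\
            Un_cv (fun n => a n / INR n) L.
Proof.
move=> Hpos Hsub.
case: (@inf_exists a Hpos) => L [HL Hinf].
exists L; split => // eps Heps.
case: (Hinf (eps / 2)) => [|k [Hk Hak]]; first lra.
set M := mxa a k.
have HM : 0 <= M by apply: mxa_nonneg.
case: (archimed_cor1 (eps / (2 * (M + 1)))) => [|N [HN HN0]].
  apply: Rdiv_lt_0_compat; lra.
exists N => n Hn; rewrite /R_dist.
have Hn0 : (0 < n)%coq_nat by lia.
have HnR : 0 < INR n by apply: lt_0_INR.
have HkR : 0 < INR k by apply: lt_0_INR.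
have HNR : 0 < INR N by apply: lt_0_INR.
have H1 := HL n Hn0.
set q := (n / k)%nat. set r := (n mod k)%nat.
have Hnqr : n = (q * k + r)%nat by rewrite /q /r mulnC; apply: Nat.div_mod_eq.
have Hr : (r < k)%coq_nat by apply: Nat.mod_upper_bound; lia.
have Hqk : INR q * INR k <= INR n.
  rewrite -mult_INR; apply: le_INR; rewrite [in X in (_ <= X)%coq_nat]Hnqr; rewrite /muln /addn /=. lia.
have Han : a n <= INR q * a k + M.
  rewrite {1}Hnqr; apply: Rle_trans (subadd_mul a Hsub q k r) _.
  have : a r <= M by apply: mxa_ge; lia.
  lra.
set x := a n / INR n. set y := a k / INR k.
have Hx : a n = x * INR n by rewrite /x; field; lra.
have Hy : a k = y * INR k by rewrite /y; field; lra.
have Hy0 : 0 <= y by apply: div_nonneg => //.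
have Hxn : x * INR n <= y * INR n + M.
  rewrite -Hx; apply: Rle_trans Han _; rewrite Hy.
  have : INR q * (y * INR k) = y * (INR q * INR k) by ring.
  nra.
have HinvN : / INR n <= / INR N by apply: Rinv_le_contravar => //; apply: le_INR; lia.
have Hxle : x <= y + M * / INR n.
  have -> : x = (x * INR n) * / INR n by field; lra.
  have -> : y = (y * INR n) * / INR n by field; lra.
  have Hi : 0 < / INR n by apply: Rinv_0_lt_compat.
  nra.
have HMe : M * / INR N <= eps / 2.
  have : / INR N * (2 * (M + 1)) < eps.
    have -> : eps = eps / (2 * (M + 1)) * (2 * (M + 1)) by field; lra.
    apply: Rmult_lt_compat_r => //; lra.
  have : 0 < / INR N by apply: Rinv_0_lt_compat.
  nra.
have Hmm : M * / INR n <= M * / INR N by apply: Rmult_le_compat_l.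
have Hy1 : y < L + eps / 2 by [].
have Hx1 : L <= x by [].
rewrite Rabs_right; lra.
Qed.

Lemma ln_le' x y : 0 < x -> x <= y -> ln x <= ln y.
Proof. move=> Hx [Hxy|->]; [left; exact: ln_increasing | exact: Rle_refl]. Qed.

End RealPart.

Lemma subexp_ball (H : groupType) (T : {fset H}) : no_exp_growth H ->
  exists n, (INR #|` ball T n| < 2 ^ n)%R.
Proof.
move=> Hno; apply: NNPP => Hall.
have Hge : forall n, (2 ^ n <= INR #|` ball T n|)%R.
  move=> n; apply: Rnot_lt_le => Hlt; apply: Hall; by exists n.
have Hb1 : forall n, (1 <= INR #|` ball T n|)%R.
  move=> n; change 1%R with (INR 1); apply: le_INR; apply/leP; exact: ball_card_gt0.
pose a n := ln (INR #|` ball T n|).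
have Hpos : forall n, (0 <= a n)%R.
  by move=> n; rewrite /a -ln_1; apply: ln_le' => //; lra.
have Hsub : forall m n, (a (m + n)%nat <= a m + a n)%R.
  move=> m n; rewrite /a -ln_mult; try (apply: Rlt_le_trans (Hb1 _); lra).
  apply: ln_le'; first (apply: Rlt_le_trans (Hb1 _); lra).
  rewrite -mult_INR; apply: le_INR; apply/leP; exact: ball_card_mul.
case: (fekete a Hpos Hsub) => L [HL Hcv].
have Hln2 : (0 < ln 2)%R by rewrite -ln_1; apply: ln_increasing; lra.
have HaL : forall n, (0 < n)%coq_nat -> (ln 2 <= a n / INR n)%R.
  move=> n Hn; have HnR : (0 < INR n)%R by apply: lt_0_INR.
  have : (INR n * ln 2 <= a n)%R.
    rewrite -ln_pow; last lra.
    apply: ln_le' => //; apply: pow_lt; lra.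
  move=> Hle; apply: (Rmult_le_reg_r (INR n)) => //.
  have -> : (a n / INR n * INR n = a n)%R by field; lra.
  lra.
have HL2 : (ln 2 <= L)%R.
  apply: Rnot_lt_le => HLt.
  case: (Hcv (ln 2 - L)%R) => [|N HN]; first lra.
  have := HN (S N) ltac:(lia); rewrite /R_dist => Habs.
  have := HaL (S N) ltac:(lia).
  have := Rle_abs (a (S N) / INR (S N) - L)%R.
  lra.
apply: (Hno (gen T)).
- split; first exact: gen_one.
  split; [move=> x y; exact: gen_mul | move=> x; exact: gen_inv].
- by exists T.
exists T; split; first by [].
exists (exp L); split; last first.
  rewrite -exp_0; apply: exp_increasing; lra.
have Hc : Un_cv (fun n => exp (a n / INR n)) (exp L).
  apply: continuity_seq => //.
  apply: derivable_continuous_pt; exact: derivable_pt_exp.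
apply: Un_cv_ext Hc => n; rewrite /Rpower /a; congr exp; rewrite /Rdiv; ring.
Qed.

Lemma nat_unbounded (X : R) : exists m : nat, (X < INR m)%R.
Proof.
exists (Z.to_nat (up X)).
case: (archimed X) => H1 _.
rewrite INR_IZR_INZ; apply: Rlt_le_trans H1 _; apply: IZR_le; lia.
Qed.

Lemma kernel_sets (H1 H2 : groupType) (G : prodG H1 H2 -> Prop) :
  infinite_to_one (@proj1G H1 H2) G -> forall m,
  exists F : {fset prodG H1 H2}, (m <= #|` F|)%N /\
    forall g, g \in F -> G g /\ g.1 = 1%g.
Proof.
move=> Hinf; elim=> [|m [F [HF HFG]]].
  by exists fset0; split => // g; rewrite in_fset0.
have [g [Gg [g1 gF]]] : exists g, G g /\ g.1 = 1%g /\ g \notin F.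
  apply: NNPP => Hno; apply: Hinf; exists F => g Gg g1.
  apply: NNPP => gF; apply: Hno; exists g; split => //; split => //; exact/negP.
exists (g |` F); split.
  by rewrite cardfsU1 gF add1n ltnS.
move=> h; rewrite in_fset1U => /orP [/eqP ->|hF]; [by [] | exact: HFG].
Qed.

Lemma gen_mono (G : groupType) (S U : {fset G}) : S `<=` U -> forall x, gen S x -> gen U x.
Proof.
move=> SU x; elim=> [y yS| |y _ IH|y z _ IHy _ IHz].
- by apply: gen_in; exact: (fsubsetP SU).
- exact: gen_one.
- exact: gen_inv.
- exact: gen_mul.
Qed.

Lemma gen_sub (G : groupType) (U : {fset G}) (K : G -> Prop) : is_subgroup K ->
  (forall u, u \in U -> K u) -> forall x, gen U x -> K x.
Proof.
move=> [K1 [KM KV]] HU x; elim=> [y yU| |y _ IH|y z _ IHy _ IHz].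
- exact: HU.
- exact: K1.
- exact: KV.
- exact: KM.
Qed.

Lemma fpow_proj (H1 H2 : groupType) (U : {fset prodG H1 H2}) n z :
  z \in fpow U n -> z.1 \in fpow [fset u.1 | u in U] n /\ z.2 \in fpow [fset u.2 | u in U] n.
Proof.
elim: n z => [|n IH] z /=.
  by rewrite !in_fset1 => /eqP ->; split.
move=> /imfset2P [x xf [y yU ->]].
have [h1 h2] := IH x xf.
split; apply/imfset2P.
  by exists x.1 => //; exists y.1 => //; apply/imfsetP; exists y.
by exists x.2 => //; exists y.2 => //; apply/imfsetP; exists y.
Qed.

Lemma fpow_prod_card (H1 H2 : groupType) (U : {fset prodG H1 H2}) n :
  (#|` fpow U n| <= #|` fpow [fset u.1 | u in U] n| * #|` fpow [fset u.2 | u in U] n|)%N.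
Proof.
apply: leq_trans (@card_imfset2_le _ _ _ (fun (a : H1) (b : H2) => ((a, b) : prodG H1 H2)) _ _).
apply: fsubset_leq_card; apply/fsubsetP => z zf.
have [h1 h2] := fpow_proj _ _ _ _ _ zf.
apply/imfset2P; exists z.1 => //; exists z.2 => //; by case: z {zf h1 h2}.
Qed.

Lemma proj1_card (H1 H2 : groupType) (S F : {fset prodG H1 H2}) :
  (forall g, g \in F -> g.1 = 1%g) ->
  (#|` [fset u.1 | u in S `|` F]| <= #|` S| + 1)%N.
Proof.
move=> HF.
have sub : [fset u.1 | u in S `|` F] `<=` [fset u.1 | u in S] `|` [fset (1 : H1)%g].
  apply/fsubsetP => x /imfsetP [u]; rewrite /= in_fsetU => /orP [uS|uF] ->.
    by rewrite in_fsetU; apply/orP; left; apply/imfsetP; exists u.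
  by rewrite in_fsetU HF // fset11 orbT.
apply: leq_trans (fsubset_leq_card sub) _.
apply: leq_trans (leq_card_fsetU _ _) _.
rewrite cardfs1 leq_add2r.
apply: leq_trans (leq_imfset_card _ _ _) _.
by [].
Qed.

Lemma INR_expn a n : INR (expn a n) = (INR a ^ n)%R.
Proof.
elim: n => [|n IH]; first by rewrite expn0.
by rewrite expnS mulnE mult_INR IH.
Qed.

Lemma leq_expn_l m n e : (m <= n)%N -> (expn m e <= expn n e)%N.
Proof. move=> H; elim: e => [|e IH]; first by rewrite !expn0. by rewrite !expnS leq_mul. Qed.

Theorem proposition2p18 (H1 H2 : groupType) (G : prodG H1 H2 -> Prop) :
  no_exp_growth H2 ->
  is_subgroup G -> fin_generated G ->
  infinite_to_one (@proj1G H1 H2) G ->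
  forall alpha beta : R, (0 < alpha)%R -> (0 < beta)%R ->
  exists U : {fset prodG H1 H2},
    generates U G /\
    exists n : nat,
      (INR #|` fpow U n| < Rpower (alpha * INR #|` U|) (beta * INR n))%R.
Proof.
move=> Hno Hsg [S0 HS0] Hinf alpha beta Ha Hb.
set s := #|` S0|.
set c := ((INR s + 1) * 2)%R.
have Hc : (0 < c)%R by rewrite /c; have := pos_INR s; lra.
case: (nat_unbounded (Rpower c (/ beta) / alpha)) => m Hm.
case: (kernel_sets _ _ G Hinf m) => F [HmF HF].
set U := S0 `|` F.
have HUG : generates U G.
  move=> x; split.
    apply: (@gen_sub _ U G Hsg _ x) => u; rewrite in_fsetU => /orP [uS|uF].
      by apply/HS0; apply: gen_in.
    by case: (HF u uF).
  move=> Gx; apply: (@gen_mono _ S0 U (fsubsetUl S0 F) x); exact/HS0.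
exists U; split => //.
set T := [fset u.2 | u in U].
case: (subexp_ball _ T Hno) => n Hn.
exists n.
have Hnat : (#|` fpow U n| <= expn (s + 1) n * #|` ball T n|)%N.
  apply: leq_trans (fpow_prod_card _ _ U n) _.
  apply: leq_mul; last exact: fsubset_leq_card (fpow_ball _ _ _).
  apply: leq_trans (fpow_card _ _ _) _.
  apply: leq_expn_l; apply: proj1_card => g gF; by case: (HF g gF).
have HR : (INR #|` fpow U n| <= INR (s + 1) ^ n * INR #|` ball T n|)%R.
  rewrite -INR_expn -mult_INR; apply: le_INR; apply/leP; exact: Hnat.
have HsR : INR (s + 1) = (INR s + 1)%R by rewrite addn1 S_INR.
rewrite HsR in HR.
have HU : (INR m <= INR #|` U|)%R.
  apply: le_INR; apply/leP; apply: leq_trans HmF _; apply: fsubset_leq_card; exact: fsubsetUr.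
have HX : (0 < Rpower c (/ beta))%R by rewrite /Rpower; apply: exp_pos.
have HaU : (Rpower c (/ beta) <= alpha * INR #|` U|)%R.
  have : (Rpower c (/ beta) < alpha * INR m)%R.
    have -> : Rpower c (/ beta) = (Rpower c (/ beta) / alpha * alpha)%R by field; lra.
    rewrite Rmult_comm; apply: Rmult_lt_compat_l => //.
  have : (alpha * INR m <= alpha * INR #|` U|)%R by apply: Rmult_le_compat_l; lra.
  lra.
have Hcb : (c <= Rpower (alpha * INR #|` U|) beta)%R.
  have {1}-> : c = Rpower (Rpower c (/ beta)) beta.
    by rewrite Rpower_mult Rinv_l ?Rpower_1 //; lra.
  apply: Rle_Rpower_l; [lra | split => //].
have -> : Rpower (alpha * INR #|` U|) (beta * INR n) = (Rpower (alpha * INR #|` U|) beta ^ n)%R.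
  by rewrite -Rpower_mult Rpower_pow // /Rpower; apply: exp_pos.
apply: Rle_lt_trans HR _.
apply: Rlt_le_trans (pow_incr c _ n _); last lra.
rewrite /c Rpow_mult_distr.
apply: Rmult_lt_compat_l => //; apply: pow_lt; have := pos_INR s; lra.
Qed.
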